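(* There exist a comparable abstract numeration system $\mathcal{S}$ and an $\mathcal{S}$-automatic infinite word $\mathbf{x}$ such that the winning shift $W(X)$ of the orbit closure $X$ of $\mathbf{x}$ has infinite coding dimension.
   Context: ANS: $\mathcal{S}=(L,\prec)$ with $L$ an infinite language and $\prec$ a total order on $L$ of order type $\omega$; $\mathrm{rep}(n)$ is the $n$-th word of $L$; tuples are represented by left-padding component representations with a new symbol $\#$ to equal length; $Y\subseteq\mathbb{N}^d$ is $\mathcal{S}$-recognizable if $\mathrm{rep}(Y)$ is regular. $\mathcal{S}$ is comparable if $\{(x,y):x\le y\}$ is $\mathcal{S}$-recognizable. $\mathbf{x}$ is $\mathcal{S}$-automatic if a DFA with output outputs $\mathbf{x}[n]$ on input $\mathrm{rep}(n)$ for all $n\ge0$. Winning shift: for $X\subseteq A^{\mathbb{N}}$ and a choice sequence $\alpha\in\{0,\dots,|A|-1\}^{\mathbb{N}}$, Alice and Bob play infinitely many rounds; in round $j$ Alice chooses $A_j\subseteq A$ with $|A_j|=\alpha_j+1$ and Bob chooses $a_j\in A_j$; Alice wins if $a_0a_1\cdots\in X$. $W(X)$ is the set of $\alpha$ for which Alice has a winning strategy. Infinite coding dimension: no $d$ bounds $\sum_iy_i$ over $\mathbf{y}\in W(X)$. *)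

(* Defs.v *)
From mathcomp Require Import all_boot.
Set Implicit Arguments. Unset Strict Implicit. Unset Printing Implicit Defensive.

Record dfa (A : finType) := DFA {
  dfa_state : finType;
  dfa_start : dfa_state;
  dfa_trans : dfa_state -> A -> dfa_state;
  dfa_final : pred dfa_state }.

Definition dfa_accepts (A : finType) (D : dfa A) (w : seq A) : bool :=
  @dfa_final A D (foldl (@dfa_trans A D) (@dfa_start A D) w).

Definition regular (A : finType) (Lang : seq A -> Prop) : Prop :=
  exists D : dfa A, forall w, dfa_accepts D w <-> Lang w.

Record dfao (A B : finType) := DFAO {
  dfao_state : finType;
  dfao_start : dfao_state;
  dfao_trans : dfao_state -> A -> dfao_state;
  dfao_out : dfao_state -> B }.

Definition dfao_eval (A B : finType) (M : dfao A B) (w : seq A) : B :=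
  @dfao_out A B M (foldl (@dfao_trans A B M) (@dfao_start A B M) w).

(* S = (L, ≺) with L ⊆ Σ* infinite and ≺ a total order on L of order type ω.
   Such an S is the same as the order isomorphism (N,<) -> (L,≺), i.e. an
   injective map rep : nat -> seq Σ with L = range rep and
   rep m ≺ rep n  <->  m < n.  rep n is the n-th word of L. *)
Record ANS := MkANS {
  ans_sigma : finType;
  rep : nat -> seq ans_sigma;
  rep_inj : injective rep }.

Definition ans_lang (S : ANS) (w : seq (ans_sigma S)) : Prop :=
  exists n, rep S n = w.
Definition ans_lt (S : ANS) (u v : seq (ans_sigma S)) : Prop :=
  exists m n, rep S m = u /\ rep S n = v /\ m < n.

(* Letters for d-tuples: d-tuples of (Σ ∪ {#}), with None playing #. *)
Definition tletter (S : ANS) (d : nat) := {ffun 'I_d -> option (ans_sigma S)}.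

(* rep of a d-tuple: left-pad each component representation with # to the
   common (maximal) length, and read the result as a word over tuples. *)
Definition rep_tuple (S : ANS) (d : nat) (y : 'I_d -> nat)
  : seq (tletter S d) :=
  let m := \max_(i < d) size (rep S (y i)) in
  mkseq (fun k => [ffun i : 'I_d =>
           let w := rep S (y i) in
           let p := m - size w in
           if k < p then None else nth None (map Some w) (k - p)]) m.

Definition S_recognizable (S : ANS) (d : nat) (Y : ('I_d -> nat) -> Prop)
  : Prop :=
  regular (fun w : seq (tletter S d) => exists y, Y y /\ rep_tuple S y = w).

Definition comparable_ANS (S : ANS) : Prop :=
  S_recognizable S (fun y : 'I_2 -> nat => y ord0 <= y ord_max).

Definition S_automatic (S : ANS) (B : finType) (x : nat -> B) : Prop :=
  exists M : dfao (ans_sigma S) B, forall n, x n = dfao_eval M (rep S n).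

(* Orbit closure of x in B^N (product topology): the sequences all of whose
   prefixes occur as factors of x. *)
Definition orbit_closure (B : finType) (x : nat -> B) (y : nat -> B) : Prop :=
  forall k, exists i, forall j, j < k -> y j = x (i + j).

(* A strategy of Alice: given Bob's previous choices a_0..a_{j-1}, a set A_j. *)
Definition strategy (B : finType) := seq B -> {set B}.

(* alpha ∈ W(X): alpha is a choice sequence in {0,...,|A|-1}^N and Alice has a
   winning strategy in the game with choice sequence alpha. *)
Definition winning_shift (B : finType) (X : (nat -> B) -> Prop)
  (alpha : nat -> nat) : Prop :=
  (forall j, alpha j < #|B|) /\
  exists s : strategy B,
    (forall h : seq B, #|s h| = (alpha (size h)).+1) /\
    (forall a : nat -> B,
       (forall j, a j \in s (mkseq a j)) -> X a).

Definition infinite_coding_dimension (B : finType) (X : (nat -> B) -> Prop)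
  : Prop :=
  forall d : nat, exists y, winning_shift X y /\
    ~ (forall N, \sum_(i < N) y i <= d).

(* Main.v *)
Require Import Defs.
From mathcomp Require Import all_boot zify.
Set Implicit Arguments. Unset Strict Implicit.

Fixpoint bval (u : seq bool) : nat :=
  if u is b :: u' then b * 2 ^ size u' + bval u' else 0.

Lemma bval_lt u : bval u < 2 ^ size u.
Proof.
elim: u => [|b u IH] //=; rewrite expnS.
case: b => /=; lia.
Qed.

Lemma bval_inj u v : size u = size v -> bval u = bval v -> u = v.
Proof.
elim: u v => [|a u IH] [|b v] //= [] Hs Hv.
have := bval_lt u; have := bval_lt v; rewrite Hs => h1 h2.
rewrite Hs in Hv.
case: a b Hv => [] [] /= Hv.
- by rewrite (IH v) //; lia.
- lia.
- lia.
- by rewrite (IH v) //; lia.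
Qed.

Fixpoint lexc (u v : seq bool) : option bool :=
  match u, v with
  | a :: u', b :: v' => if a == b then lexc u' v' else Some b
  | _, _ => None
  end.

Lemma lexcP u v : size u = size v ->
  match lexc u v return Prop with
  | None => u = v
  | Some true => bval u < bval v
  | Some false => bval v < bval u
  end.
Proof.
elim: u v => [|a u IH] [|b v] //= [] Hs.
have := bval_lt u; have := bval_lt v; rewrite Hs => h1 h2.
have := IH v Hs.
case: a; case: b => /=; case: (lexc u v) => [[]|] //=; try lia; by move=> ->.
Qed.

Fixpoint Sl (l : nat) : nat := if l is l'.+1 then Sl l' + l' * 2 ^ l' else 0.

Lemma Sl_mono m n : m <= n -> Sl m <= Sl n.
Proof.
elim: n => [|n IH]; first by rewrite leqn0 => /eqP ->.
rewrite leq_eqVlt => /orP [/eqP -> //|]; rewrite ltnS => /IH /=; lia.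
Qed.

Definition rank (t : seq bool * nat) := Sl (size t.1) + bval t.1 * size t.1 + t.2.
Definition validt (t : seq bool * nat) := (0 < size t.1) && (t.2 < size t.1).

Lemma rank_bounds t : validt t -> Sl (size t.1) <= rank t < Sl (size t.1).+1.
Proof.
case: t => u i /andP [] /= H0 Hi; rewrite /rank /=.
have := bval_lt u. set P := 2 ^ size u. set l := size u in H0 Hi *.
move=> Hv. have : bval u * l + i < P * l by nia.
lia.
Qed.

Lemma rank_lt_level t0 t1 : validt t0 -> validt t1 ->
  size t0.1 < size t1.1 -> rank t0 < rank t1.
Proof.
move=> V0 V1 Hl; have := rank_bounds V0; have := rank_bounds V1.
have := Sl_mono Hl; lia.
Qed.

Lemma rank_same t0 t1 : validt t0 -> validt t1 -> size t0.1 = size t1.1 ->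
  (rank t0 <= rank t1) = 
  ((lexc t0.1 t1.1 == Some true) || ((lexc t0.1 t1.1 == None) && (t0.2 <= t1.2))).
Proof.
case: t0 t1 => u0 i0 [u1 i1] /andP [/= _ H0] /andP [/= _ H1] /= Hs.
rewrite /rank /= Hs; have := lexcP Hs.
case: (lexc u0 u1) => [[]|] /= H.
- apply/idP; nia.
- apply/idP => /=; nia.
- subst; lia.
Qed.

Lemma rank_inj t0 t1 : validt t0 -> validt t1 -> rank t0 = rank t1 -> t0 = t1.
Proof.
move=> V0 V1 E.
have Hs : size t0.1 = size t1.1.
  case: (ltngtP (size t0.1) (size t1.1)) => // H.
  - by have := rank_lt_level V0 V1 H; lia.
  - by have := rank_lt_level V1 V0 H; lia.
case: t0 t1 V0 V1 E Hs => u0 i0 [u1 i1] /andP [/= _ H0] /andP [/= _ H1].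
rewrite /rank /= => E Hs; rewrite Hs in E.
have := lexcP Hs; case: (lexc u0 u1) => [[]|] /= H; try nia.
subst; congr pair; lia.
Qed.

Fixpoint incr (u : seq bool) : bool * seq bool :=
  if u is b :: u' then let (c, r) := incr u' in (b && c, addb b c :: r)
  else (true, [::]).

Lemma incrP u : size (incr u).2 = size u /\
  bval (incr u).2 + (incr u).1 * 2 ^ size u = (bval u).+1.
Proof.
elim: u => [|b u IH] //=.
case: (incr u) IH => c r /= [Hs Hv]; split; first by rewrite Hs.
rewrite Hs expnS; case: b; case: c Hv => /=; lia.
Qed.

Lemma bval_nseq n : bval (nseq n false) = 0.
Proof. by elim: n. Qed.

Definition next (t : seq bool * nat) : seq bool * nat :=
  let (u, i) := t in
  if i.+1 < size u then (u, i.+1)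
  else let (c, r) := incr u in
       if c then (nseq (size u).+1 false, 0) else (r, 0).

Lemma nextP t : validt t -> validt (next t) /\ rank (next t) = (rank t).+1.
Proof.
case: t => u i /andP [/= H0 Hi]; rewrite /next.
case: ltnP => Hi1.
  by rewrite /validt /rank /= H0 Hi1; split => //; lia.
have Ei : i = (size u).-1 by lia.
have := incrP u; have := bval_lt u.
case: (incr u) => c r /= Hv [Hs Hr].
case: c Hr => /= Hr.
- rewrite /validt /rank /= size_nseq bval_nseq; split => //.
  have Ev : (bval u).+1 = 2 ^ size u by lia.
  rewrite /=. nia.
- rewrite /validt /rank /= Hs H0; split => //. nia.
Qed.

Fixpoint dec (n : nat) : seq bool * nat :=
  if n is n'.+1 then next (dec n') else ([:: false], 0).

Lemma dec_ok n : validt (dec n) /\ rank (dec n) = n.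
Proof.
elim: n => [|n [V R]] //=.
by have [-> ->] := nextP V; rewrite R.
Qed.

Lemma dec_rank t : validt t -> dec (rank t) = t.
Proof.
move=> V; have [V' R] := dec_ok (rank t); exact: rank_inj V' V R.
Qed.

Definition Sig := (bool * bool)%type.
Definition nexto (o : option nat) : option nat :=
  if o is Some j.+1 then Some j else None.
Fixpoint encr (u : seq bool) (o : option nat) : seq Sig :=
  if u is b :: u' then (b, o == Some 0) :: encr u' (nexto o) else [::].
Definition enc (t : seq bool * nat) := encr t.1 (Some t.2).

Lemma size_encr u o : size (encr u o) = size u.
Proof. by elim: u o => //= b u IH o; rewrite IH. Qed.

Lemma fst_encr u o : map fst (encr u o) = u.
Proof. by elim: u o => //= b u IH o; rewrite IH. Qed.

Lemma enc_inj t0 t1 : validt t0 -> validt t1 -> enc t0 = enc t1 -> t0 = t1.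
Proof.
case: t0 t1 => u0 i0 [u1 i1] /andP [_ H0] /andP [_ H1]; rewrite /enc /=.
elim: u0 u1 i0 i1 H0 H1 => [|a u IH] [|b v] //= i0 i1 H0 H1 [E0 E1 E2].
subst b.
case: i0 i1 H0 H1 E1 E2 => [|i0] [|i1] //= H0 H1 _ E.
- by have := congr1 (map fst) E; rewrite !fst_encr => ->.
- by case: (IH _ _ _ H0 H1 E) => -> ->.
Qed.

Definition repf (n : nat) : seq Sig := enc (dec n).

Lemma repf_inj : injective repf.
Proof.
move=> a b E; have [Va Ra] := dec_ok a; have [Vb Rb] := dec_ok b.
by rewrite -Ra -Rb (enc_inj Va Vb E).
Qed.

Definition Sans : ANS := MkANS repf_inj.

Definition xs (n : nat) : bool := nth false (dec n).1 (dec n).2.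

Definition dtr (s : option bool) (a : Sig) : option bool :=
  if s is Some b then Some b else if a.2 then Some a.1 else None.

Lemma dtr_abs b s : foldl dtr (Some b) s = Some b.
Proof. by elim: s. Qed.

Lemma dtr_enc u i : i < size u -> foldl dtr None (encr u (Some i)) = Some (nth false u i).
Proof.
elim: u i => [|b u IH] [|i] //= Hi; first exact: dtr_abs.
exact: IH.
Qed.

Lemma xs_auto : S_automatic Sans xs.
Proof.
exists (DFAO None dtr (fun s => odflt false s)) => n.
rewrite /dfao_eval /= /repf /enc /xs.
have [/andP [_ Hi] _] := dec_ok n.
by rewrite dtr_enc.
Qed.

Lemma xs_full (y : nat -> bool) : orbit_closure xs y.
Proof.
move=> k; case: k => [|k]; first by exists 0.
pose u := mkseq y k.+1.
exists (rank (u, 0)) => j Hj.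
have V : validt (u, j) by rewrite /validt /u size_mkseq.
have -> : rank (u, 0) + j = rank (u, j) by rewrite /rank /=; lia.
by rewrite /xs dec_rank //= nth_mkseq.
Qed.

Lemma icd : infinite_coding_dimension (orbit_closure xs).
Proof.
move=> d; exists (fun _ => 1); split.
  split; first by move=> j; rewrite card_bool.
  exists (fun _ => setT); split; first by move=> h; rewrite cardsT card_bool.
  move=> a _; exact: xs_full.
move=> /(_ d.+1); rewrite sum_nat_const card_ord muln1; lia.
Qed.

Definition ttr (s : option (bool*bool)) (a : option Sig) : option (bool*bool) :=
  match s, a with
  | None, _ => None
  | Some (st, hs), None => if st then None else Some (false, hs)
  | Some (st, hs), Some (_, h) => if hs && h then None else Some (true, hs || h)
  end.
Definition ltr (s : option (option bool)) (a0 a1 : option Sig) :=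
  match s with
  | Some _ => s
  | None => match a0, a1 with
            | None, Some _ => Some (Some true)
            | Some _, Some _ => Some None
            | _, _ => Some (Some false) end
  end.
Definition btr (s : option bool) (a0 a1 : option Sig) :=
  match s, a0, a1 with
  | None, Some (b0, _), Some (b1, _) => if b0 == b1 then None else Some b1
  | _, _, _ => s end.
Definition htr (s : option (option bool)) (a0 a1 : option Sig) :=
  match s, a0, a1 with
  | None, Some (_, h0), Some (_, h1) =>
      if h0 && h1 then Some None else if h0 then Some (Some true)
      else if h1 then Some (Some false) else None
  | _, _, _ => s end.

Definition Lt := tletter Sans 2.
Definition St := (option (bool*bool) * option (bool*bool) * option (option bool)
                  * option bool * option (option bool))%type.

Definition TR (st : St) (l : Lt) : St :=
  let a0 := l ord0 in let a1 := l ord_max in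
  match st with (s0, s1, ls, bs, hs) =>
    (ttr s0 a0, ttr s1 a1, ltr ls a0 a1, btr bs a0 a1, htr hs a0 a1) end.

Definition accf (ls : option (option bool)) (bs : option bool) (hs : option (option bool)) :=
  (ls == Some (Some true)) || ((ls == Some None) &&
    ((bs == Some true) || ((bs == None) && ((hs == Some None) || (hs == Some (Some true)))))).

Definition FIN (st : St) : bool :=
  match st with (s0, s1, ls, bs, hs) =>
   [&& s0 == Some (true, true), s1 == Some (true, true) & accf ls bs hs] end.

Definition start : St := (Some (false, false), Some (false, false), None, None, None).

Definition D : dfa Lt := DFA start TR FIN.

Definition trk (j : 'I_2) (w : seq Lt) : seq (option Sig) := map (fun l : Lt => l j) w.

Lemma fold_TR s0 s1 ls bs hs w :
  foldl TR (s0, s1, ls, bs, hs) w =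
  (foldl ttr s0 (trk ord0 w), foldl ttr s1 (trk ord_max w),
   foldl (fun s (l : Lt) => ltr s (l ord0) (l ord_max)) ls w,
   foldl (fun s (l : Lt) => btr s (l ord0) (l ord_max)) bs w,
   foldl (fun s (l : Lt) => htr s (l ord0) (l ord_max)) hs w).
Proof. by elim: w s0 s1 ls bs hs => //= l w IH *; rewrite IH. Qed.

Lemma ttr_dead s : foldl ttr None s = None.
Proof. by elim: s. Qed.

Lemma ttr_pad p : foldl ttr (Some (false, false)) (nseq p None) = Some (false, false).
Proof. by elim: p. Qed.

Lemma ttr_nohat u : foldl ttr (Some (true, true)) (map Some (encr u None)) = Some (true, true).
Proof. by elim: u. Qed.

Lemma ttr_enc u i st : i < size u ->
  foldl ttr (Some (st, false)) (map Some (encr u (Some i))) = Some (true, true).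
Proof.
elim: u i st => [|b u IH] [|i] st //= Hi; first exact: ttr_nohat.
exact: IH.
Qed.

Lemma ttr_track p t : validt t ->
  foldl ttr (Some (false, false)) (nseq p None ++ map Some (enc t)) = Some (true, true).
Proof.
case: t => u i /andP [_ Hi]; by rewrite foldl_cat ttr_pad ttr_enc.
Qed.

Lemma ttr_inv1 s hs : foldl ttr (Some (true, hs)) s = Some (true, true) ->
  exists r, s = map Some r /\ count snd r + hs = 1.
Proof.
elim: s hs => [|a s IH] hs /=.
  by case=> ->; exists [::].
case: a => [[b h]|] /=; last by rewrite ttr_dead.
case: ifP => Hh; first by rewrite ttr_dead.
case/IH => r [-> Hc]; exists ((b, h) :: r); split => //=.
by move: Hc Hh; case: hs; case: h => /=; lia.
Qed.

Lemma ttr_inv s : foldl ttr (Some (false, false)) s = Some (true, true) ->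
  exists p r, s = nseq p None ++ map Some r /\ count snd r = 1.
Proof.
elim: s => [|a s IH] //=.
case: a => [[b h]|] /=.
  case/ttr_inv1 => r [-> Hc]; exists 0, ((b, h) :: r); split => //=; lia.
by case/IH => p [r [-> Hc]]; exists p.+1, r.
Qed.

Lemma encr_none r : count snd r = 0 -> r = encr (map fst r) None.
Proof.
elim: r => [|[b h] r IH] //=; case: h => //= Hc.
by rewrite -IH.
Qed.

Lemma decode r : count snd r = 1 ->
  validt (map fst r, find snd r) /\ r = enc (map fst r, find snd r).
Proof.
rewrite /validt /enc /=; elim: r => [|[b h] r IH] //=.
case: h => /= Hc.
  by split => //; rewrite -encr_none //; lia.
have [/andP [_ H] E] := IH Hc; split; first by rewrite /= size_map in H *; lia.
by rewrite -E.
Qed.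

Lemma fold_tracks (A : Type) (f : A -> option Sig -> option Sig -> A) st w r0 r1 :
  trk ord0 w = map Some r0 -> trk ord_max w = map Some r1 ->
  foldl (fun s (l : Lt) => f s (l ord0) (l ord_max)) st w =
  foldl (fun s p => f s (Some p.1) (Some p.2)) st (zip r0 r1).
Proof.
elim: w st r0 r1 => [|l w IH] st [|a r0] [|b r1] //= [E0 H0] [E1 H1].
by rewrite E0 E1 /=; apply: IH.
Qed.

Lemma btr_abs c s : foldl (fun s p => btr s (Some p.1) (Some p.2)) (Some c) s = Some c.
Proof. by elim: s. Qed.

Lemma btr_enc u0 u1 o0 o1 :
  foldl (fun s p => btr s (Some p.1) (Some p.2)) None (zip (encr u0 o0) (encr u1 o1))
  = lexc u0 u1.
Proof.
elim: u0 u1 o0 o1 => [|a u0 IH] [|b u1] o0 o1 //=.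
case: eqP => _; [exact: IH | exact: btr_abs].
Qed.

Definition hc (i0 i1 : nat) : option (option bool) :=
  if i0 == i1 then Some None else Some (Some (i0 < i1)).

Lemma htr_abs c s : foldl (fun s p => htr s (Some p.1) (Some p.2)) (Some c) s = Some c.
Proof. by elim: s. Qed.

Lemma htr_enc u0 u1 i0 i1 : i0 < size u0 -> i1 < size u1 ->
  foldl (fun s p => htr s (Some p.1) (Some p.2)) None
    (zip (encr u0 (Some i0)) (encr u1 (Some i1))) = hc i0 i1.
Proof.
elim: u0 u1 i0 i1 => [|a u0 IH] [|b u1] [|i0] [|i1] //= H0 H1; try exact: htr_abs.
by rewrite IH.
Qed.

Lemma ltr_abs c (w : seq Lt) :
  foldl (fun s (l : Lt) => ltr s (l ord0) (l ord_max)) (Some c) w = Some c.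
Proof. by elim: w. Qed.

Lemma ltr_first (l : Lt) w :
  foldl (fun s (l : Lt) => ltr s (l ord0) (l ord_max)) None (l :: w) =
  ltr None (l ord0) (l ord_max).
Proof.
rewrite /=; case: (l ord0) => [a|]; case: (l ord_max) => [b|] /=; exact: ltr_abs.
Qed.

Lemma central w p0 p1 t0 t1 : validt t0 -> validt t1 ->
  trk ord0 w = nseq p0 None ++ map Some (enc t0) ->
  trk ord_max w = nseq p1 None ++ map Some (enc t1) ->
  dfa_accepts D w = ((p0 == 0) || (p1 == 0)) && (rank t0 <= rank t1).
Proof.
move=> V0 V1 H0 H1.
rewrite /dfa_accepts /= /start fold_TR H0 H1 !ttr_track //=.
have S0 := congr1 (@size _) H0; have S1 := congr1 (@size _) H1.
rewrite /trk size_map size_cat size_nseq size_map /enc size_encr in S0.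
rewrite /trk size_map size_cat size_nseq size_map /enc size_encr in S1.
case: t0 t1 V0 V1 H0 H1 S0 S1 => u0 i0 [u1 i1] V0 V1 H0 H1 S0 S1.
move: (V0) (V1) => /andP [/= Z0 I0] /andP [/= Z1 I1].
case: w H0 H1 S0 S1 => [|l w] H0 H1 S0 S1; first by move: S0 => /=; lia.
case: u0 V0 Z0 I0 H0 S0 => [//|b0 u0'] V0 Z0 I0 H0 S0.
case: u1 V1 Z1 I1 H1 S1 => [//|b1 u1'] V1 Z1 I1 H1 S1.
rewrite ltr_first.
case: p0 H0 S0 => [|p0] H0 S0; case: p1 H1 S1 => [|p1] H1 S1.
-
  have H0' : trk ord0 (l :: w) = map Some (encr (b0 :: u0') (Some i0)) by exact: H0.
  have H1' : trk ord_max (l :: w) = map Some (encr (b1 :: u1') (Some i1)) by exact: H1.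
  rewrite (fold_tracks _ _ H0' H1') (fold_tracks _ _ H0' H1').
  rewrite btr_enc htr_enc //.
  move: (H0) (H1) => /= [E0 _] [E1 _]; rewrite E0 E1 /accf /=.
  rewrite rank_same //=; last by move: S0 S1 => /= F1 F2; rewrite add0n in F1; rewrite add0n in F2; rewrite -F1 -F2.
  rewrite /hc; case: ifP => _; [case: (lexc _ _) => [[]|] | case: (b1)] => //=;
  by case: ltngtP.
- move: (H0) (H1) => /= [E0 _] [E1 _]; rewrite E0 E1 /accf /=.
  symmetry; apply/negbTE; rewrite -ltnNge; apply: rank_lt_level => //=; move: S0 S1 => /=; lia.
- move: (H0) (H1) => /= [E0 _] [E1 _]; rewrite E0 E1 /accf /=.
  symmetry; apply: leq_trans (ltnW (rank_lt_level V0 V1 _)) => //=; move: S0 S1 => /=; lia.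
- by move: (H0) (H1) => /= [E0 _] [E1 _]; rewrite E0 E1.
Qed.


Lemma ord2 (j : 'I_2) : j = ord0 \/ j = ord_max.
Proof.
case: j => [[|[|j]] Hj] //.
- by left; apply: val_inj.
- by right; apply: val_inj.
Qed.

Lemma trk_eq (w1 w2 : seq Lt) :
  trk ord0 w1 = trk ord0 w2 -> trk ord_max w1 = trk ord_max w2 -> w1 = w2.
Proof.
elim: w1 w2 => [|a w1 IH] [|b w2] //= [Ea E0] [Eb E1].
rewrite (IH w2) //; congr cons; apply/ffunP => j.
case: j => [[|[|j]] Hj] //.
- by have -> : Ordinal Hj = ord0 by apply: val_inj.
- by have -> : Ordinal Hj = ord_max by apply: val_inj.
Qed.

Lemma mkseq_pad (w : seq Sig) m : size w <= m ->
  mkseq (fun k => if k < m - size w then None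
                  else nth None (map Some w) (k - (m - size w))) m
  = nseq (m - size w) None ++ map Some w.
Proof.
move=> Hm; apply: (@eq_from_nth _ None).
  by rewrite size_mkseq size_cat size_nseq size_map subnK.
move=> k; rewrite size_mkseq => Hk; rewrite nth_mkseq // nth_cat size_nseq.
by case: ifP => // _; rewrite nth_nseq; case: ifP.
Qed.

Lemma trk_rep_tuple (y : 'I_2 -> nat) j :
  trk j (rep_tuple Sans y) =
  nseq (maxn (size (repf (y ord0))) (size (repf (y ord_max))) - size (repf (y j))) None
  ++ map Some (repf (y j)).
Proof.
rewrite /rep_tuple /trk.
have -> : \max_(i < 2) size (rep Sans (y i)) =
          maxn (size (repf (y ord0))) (size (repf (y ord_max))).
  by rewrite big_ord_recr big_ord_recr big_ord0 /= max0n; congr maxn; congr (size (repf (y _))); apply: val_inj.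
rewrite -(@mkseq_pad (repf (y j))); last first.
  by case: (ord2 j) => ->; [apply: leq_maxl | apply: leq_maxr].
rewrite /mkseq -map_comp; apply: eq_map => k /=; by rewrite ffunE.
Qed.

Lemma repf_rank t : validt t -> repf (rank t) = enc t.
Proof. by move=> V; rewrite /repf dec_rank. Qed.

Lemma comp : comparable_ANS Sans.
Proof.
exists D => w; split.
- move=> Hacc.
  have Hacc' := Hacc.
  move: Hacc; rewrite /dfa_accepts /= /start fold_TR /= => /and3P [/eqP T0 /eqP T1 _].
  have [p0 [r0 [E0 C0]]] := ttr_inv T0.
  have [p1 [r1 [E1 C1]]] := ttr_inv T1.
  have [V0 R0] := decode C0; have [V1 R1] := decode C1.
  set t0 := (map fst r0, find snd r0) in V0 R0.
  set t1 := (map fst r1, find snd r1) in V1 R1.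
  rewrite R0 in E0; rewrite R1 in E1.
  move: Hacc'; rewrite (central V0 V1 E0 E1) => /andP [Hp Hr].
  exists (fun j : 'I_2 => if val j == 0 then rank t0 else rank t1); split => //=.
  apply: trk_eq.
  + rewrite trk_rep_tuple E0 /= !repf_rank //.
    have S0 := congr1 (@size _) E0; have S1 := congr1 (@size _) E1.
    rewrite /trk size_map size_cat size_nseq size_map in S0.
    rewrite /trk size_map size_cat size_nseq size_map in S1.
    congr (nseq _ _ ++ _); move: Hp; lia.
  + rewrite trk_rep_tuple E1 /= !repf_rank //.
    have S0 := congr1 (@size _) E0; have S1 := congr1 (@size _) E1.
    rewrite /trk size_map size_cat size_nseq size_map in S0.
    rewrite /trk size_map size_cat size_nseq size_map in S1.
    congr (nseq _ _ ++ _); move: Hp; lia.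
- move=> [y [Hle <-]].
  have [V0 R0] := dec_ok (y ord0); have [V1 R1] := dec_ok (y ord_max).
  rewrite (central V0 V1 (trk_rep_tuple y ord0) (trk_rep_tuple y ord_max)) R0 R1 Hle.
  rewrite andbT; apply/orP; lia.
Qed.

Theorem mainTheorem9 :
  exists (S : ANS) (B : finType) (x : nat -> B),
    comparable_ANS S /\ S_automatic S x /\
    infinite_coding_dimension (orbit_closure x).
Proof.
exists Sans, bool, xs; split; first exact: comp.
split; [exact: xs_auto | exact: icd].
Qed.
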